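(* Let $g:\{\pm1\}^{m_1}\times\{\pm1\}^{m_2}\to\{\pm1\}$ be a gadget with $\hat g(S,T)=0$ whenever $S=\emptyset$ or $T=\emptyset$. Then for all $k,d,n$, $$L_{1,k}(g,d,m_1,m_2,n)\le\Bigl(\sum_{S,T}|\hat g(S,T)|\Bigr)^{k}L_{1,k}(\mathrm{XOR},d,1,1,n)\le 2^{(m_1+m_2)k/2}L_{1,k}(\mathrm{XOR},d,1,1,n).$$
   Context: $\hat g(S,T)=\mathbb{E}[g(\mathbf{x},\mathbf{y})\prod_{j\in S}\mathbf{x}_j\prod_{j\in T}\mathbf{y}_j]$ for uniform $\mathbf{x}\in\{\pm1\}^{m_1},\mathbf{y}\in\{\pm1\}^{m_2}$, and the sum is over all $S\subseteq[m_1],T\subseteq[m_2]$. For a randomized two-party protocol $\mathcal{C}:(\{\pm1\}^{m_1})^n\times(\{\pm1\}^{m_2})^n\to[-1,1]$ (value = expected output over internal randomness; inputs are $n$ blocks $x_i\in\{\pm1\}^{m_1}$, $y_i\in\{\pm1\}^{m_2}$), its $g$-fiber is $\mathcal{C}_{\downarrow g}(z)=\mathbb{E}[\mathcal{C}(\mathbf{x},\mathbf{y})\mid g(\mathbf{x}_i,\mathbf{y}_i)=z_i\ \forall i]$ for uniform $\mathbf{x},\mathbf{y}$. For $f:\{\pm1\}^n\to\mathbb{R}$, $L_{1,k}(f)=\sum_{|I|=k}|\hat f(I)|$. $L_{1,k}(g,d,m_1,m_2,n)$ denotes the supremum of $L_{1,k}(\mathcal{C}_{\downarrow g})$ over all such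 randomized protocols with at most $d$ bits of communication. $\mathrm{XOR}:\{\pm1\}\times\{\pm1\}\to\{\pm1\}$ is the gadget $\mathrm{XOR}(a,b)=ab$ (so $m_1=m_2=1$). *)

(* Defs.v *)
From HB Require Import structures.
From mathcomp Require Import all_boot all_order all_algebra.
From mathcomp Require Import boolp classical_sets reals.
Set Implicit Arguments. Unset Strict Implicit. Unset Printing Implicit Defensive.
Import Order.TTheory GRing.Theory Num.Theory.
Local Open Scope ring_scope.

(* Boolean encoding of {+1,-1}: false <-> +1, true <-> -1. *)
Definition sgn {R : pzRingType} (b : bool) : R := if b then -1 else 1.

Notation Bm m := {ffun 'I_m -> bool}.

Definition gadget (m1 m2 : nat) := Bm m1 -> Bm m2 -> bool.

Definition gadget_coef (R : fieldType) m1 m2 (g : gadget m1 m2)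
  (S : {set 'I_m1}) (T : {set 'I_m2}) : R :=
  (2 ^+ (m1 + m2))^-1 *
  \sum_(x : Bm m1) \sum_(y : Bm m2)
     sgn (g x y) * (\prod_(j in S) sgn (x j)) * (\prod_(j in T) sgn (y j)).

Definition fcoef (R : fieldType) n (f : Bm n -> R) (I : {set 'I_n}) : R :=
  (2 ^+ n)^-1 * \sum_(z : Bm n) f z * \prod_(i in I) sgn (z i).

Definition L1k (R : numFieldType) n (f : Bm n -> R) (k : nat) : R :=
  \sum_(I : {set 'I_n} | #|I| == k) `|fcoef f I|.

Inductive proto (X Y : Type) : Type :=
  | PLeaf of bool
  | PAlice of (X -> bool) & proto X Y & proto X Y
  | PBob of (Y -> bool) & proto X Y & proto X Y.

Fixpoint peval X Y (p : proto X Y) (x : X) (y : Y) : bool :=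
  match p with
  | PLeaf b => b
  | PAlice a p0 p1 => if a x then peval p1 x y else peval p0 x y
  | PBob b p0 p1 => if b y then peval p1 x y else peval p0 x y
  end.

Fixpoint pcost X Y (p : proto X Y) : nat :=
  match p with
  | PLeaf _ => 0
  | PAlice _ p0 p1 => (maxn (pcost p0) (pcost p1)).+1
  | PBob _ p0 p1 => (maxn (pcost p0) (pcost p1)).+1
  end%N.

(* A randomized (public-coin) protocol: a finitely supported probability
   distribution over deterministic protocols, given as weighted list. *)
Definition rproto (R : Type) X Y := seq (R * proto X Y).

Definition rproto_valid (R : numDomainType) X Y (C : rproto R X Y) (d : nat) :=
  [/\ all (fun wp => 0 <= wp.1) C,
      \sum_(wp <- C) wp.1 = 1 &
      all (fun wp => pcost wp.2 <= d)%N C].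

Definition rval (R : pzRingType) X Y (C : rproto R X Y) (x : X) (y : Y) : R :=
  \sum_(wp <- C) wp.1 * sgn (peval wp.2 x y).

Notation Inp n m := {ffun 'I_n -> Bm m}.

Definition fiber (R : fieldType) m1 m2 n (g : gadget m1 m2)
  (C : Inp n m1 -> Inp n m2 -> R) (z : Bm n) : R :=
  let ev x y := [forall i, g (x i) (y i) == z i] in
  (\sum_(x : Inp n m1) \sum_(y : Inp n m2) if ev x y then C x y else 0) /
  (\sum_(x : Inp n m1) \sum_(y : Inp n m2) (ev x y)%:R).

Definition L1k_sup (R : realType) m1 m2 (g : gadget m1 m2) (d n k : nat) : R :=
  sup [set L1k (fiber g (rval C)) k
      | C in [set C : rproto R (Inp n m1) (Inp n m2) | rproto_valid C d]].

(* The XOR gadget on {±1} x {±1}: XOR(a,b) = ab. *)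
Definition XORg : gadget 1 1 := fun a b => a ord0 (+) b ord0.

(* Main.v *)
Require Import Defs.
From HB Require Import structures.
From mathcomp Require Import all_boot all_order all_algebra.
From mathcomp Require Import boolp classical_sets reals.
From mathcomp Require Import ring lra.
Set Implicit Arguments. Unset Strict Implicit. Unset Printing Implicit Defensive.
Import Order.TTheory GRing.Theory Num.Theory.
Local Open Scope ring_scope.

Section P1.
Variable R : realType.

Lemma sgnD (a b : bool) : sgn (a (+) b) = sgn a * sgn b :> R.
Proof. by case: a; case: b; rewrite /sgn /= ?mulN1r ?mulr1 ?opprK ?mul1r. Qed.

Lemma sgn_sq (a : bool) : sgn a * sgn a = 1 :> R.
Proof. by case: a; rewrite /sgn ?mulrNN ?mulr1. Qed.

Lemma sgn_abs (a : bool) : `|sgn a : R| = 1.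
Proof. by case: a; rewrite /sgn ?normrN normr1. Qed.

Definition par m (S : {set 'I_m}) (x : Bm m) : bool := \big[addb/false]_(j in S) x j.

Lemma chi_par m (S : {set 'I_m}) (x : Bm m) :
  \prod_(j in S) sgn (x j) = sgn (par S x) :> R.
Proof.
rewrite /par; apply: esym.
exact: (big_morph (fun b : bool => sgn b : R) (@sgnD) (erefl (sgn false : R))).
Qed.

Lemma sum_prod_set m (u : 'I_m -> R) :
  \sum_(S : {set 'I_m}) \prod_(j in S) u j = \prod_j (u j + 1).
Proof.
rewrite bigA_distr; apply: eq_big => // S _.
by rewrite big_mkcond.
Qed.

Lemma orth m (a a' : Bm m) :
  \sum_(S : {set 'I_m}) (\prod_(j in S) sgn (a j)) * (\prod_(j in S) sgn (a' j))
  = 2 ^+ m * (a == a')%:R :> R.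
Proof.
under eq_bigr => S _ do rewrite -big_split /=.
rewrite sum_prod_set.
have [->|neq] := eqVneq a a'.
  rewrite mulr1 (eq_bigr (fun _ => 2)) ?prodr_const ?card_ord //.
  by move=> j _; rewrite sgn_sq.
rewrite mulr0.
have [j hj] : exists j, a j != a' j.
  apply/existsP; rewrite -negb_forall; apply: contra neq => /forallP h.
  by apply/eqP/ffunP => j; apply/eqP.
rewrite (bigD1 j) //=.
suff -> : sgn (a j) * sgn (a' j) + 1 = 0 :> R by rewrite mul0r.
by move: hj; case: (a j); case: (a' j) => //= _; rewrite /sgn; ring.
Qed.
End P1.

Section P2.
Variable R : realType.
Variables m1 m2 : nat.
Variable g : gadget m1 m2.
Definition PT := ({set 'I_m1} * {set 'I_m2})%type.
Definition gh (p : PT) : R := gadget_coef R g p.1 p.2.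
Definition chi2 (p : PT) (a : Bm m1) (b : Bm m2) : R :=
  (\prod_(j in p.1) sgn (a j)) * (\prod_(j in p.2) sgn (b j)).

Lemma inversion a b : sgn (g a b) = \sum_(p : PT) gh p * chi2 p a b.
Proof.
rewrite /gh /gadget_coef.
under eq_bigr => p _ do rewrite -mulrA big_distrl /=.
rewrite -big_distrr /=.
under eq_bigr => p _ do under eq_bigr => x _ do rewrite big_distrl /=.
rewrite exchange_big /=.
under eq_bigr => x _ do rewrite exchange_big /=.
have inner x y : \sum_(i : PT) sgn (g x y) * \prod_(j0 in i.1) sgn (x j0) *
           \prod_(j0 in i.2) sgn (y j0) * chi2 i a b =
   sgn (g x y) * ((2 ^+ m1 * (x == a)%:R) * (2 ^+ m2 * (y == b)%:R)).
  rewrite -orth -orth big_distrlr /= pair_bigA big_distrr /=.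
  by apply: eq_bigr => p _; rewrite /chi2; ring.
under eq_bigr => x _ do under eq_bigr => y _ do rewrite inner.
rewrite (bigD1 a) //= [X in _ + X]big1 => [|x xa]; last first.
  by rewrite big1 // => y _; rewrite (negbTE xa) ?(mulr0, mul0r).
rewrite addr0 (bigD1 b) //= [X in _ + X]big1 => [|y yb]; last first.
  by rewrite (negbTE yb) ?(mulr0, mul0r).
rewrite addr0 !eqxx !mulr1 exprD [_ * (_ * _)]mulrC mulKf //.
by rewrite mulf_neq0 // expf_neq0 // pnatr_eq0.
Qed.

Lemma card_Bm m : #|{: Bm m}| = (2 ^ m)%N.
Proof. by rewrite card_ffun card_bool card_ord. Qed.

Lemma gh_alt p : gh p = 2 ^- (m1 + m2) * \sum_x \sum_y sgn (g x y) * chi2 p x y.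
Proof.
rewrite /gh /gadget_coef; congr (_ * _); apply: eq_bigr => x _; apply: eq_bigr => y _.
by rewrite /chi2 mulrA.
Qed.

Lemma mulrn2X (x : R) n : x *+ (2 ^ n) = x * 2 ^+ n.
Proof. rewrite -[LHS]mulr_natr. congr (_ * _); exact: natrX. Qed.

Lemma N_neq0 : (2 ^+ (m1 + m2) : R) != 0.
Proof. by rewrite expf_neq0 // pnatr_eq0. Qed.

Lemma parseval : \sum_(p : PT) gh p ^+ 2 = 1.
Proof.
under eq_bigr => p _ do rewrite expr2 {2}gh_alt mulrCA.
rewrite -big_distrr /=.
under eq_bigr => p _ do rewrite big_distrr /=.
under eq_bigr => p _ do under eq_bigr => x _ do rewrite big_distrr /=.
rewrite exchange_big /=.
under eq_bigr => x _ do rewrite exchange_big /=.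
have e x y : \sum_(p : PT) gh p * (sgn (g x y) * chi2 p x y) = 1.
  under eq_bigr => p _ do rewrite mulrCA.
  by rewrite -big_distrr /= -inversion sgn_sq.
under eq_bigr => x _ do under eq_bigr => y _ do rewrite e.
rewrite (eq_bigr (fun _ => (2 ^+ m2 : R))); last first.
  by move=> x _; rewrite sumr_const card_Bm; exact: natrX.
rewrite sumr_const card_Bm mulrn2X.
by rewrite -exprD [(m2 + m1)%N]addnC mulVf // N_neq0.
Qed.

Lemma cs (T : finType) (f : T -> R) :
  (\sum_t f t) ^+ 2 <= #|T|%:R * \sum_t f t ^+ 2.
Proof.
set A := \sum_t f t ^+ 2; set B := \sum_t f t.
have h : 0 <= \sum_s \sum_t (f s - f t) ^+ 2.
  by apply: sumr_ge0 => s _; apply: sumr_ge0 => t _; exact: sqr_ge0.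
have e1 s : \sum_t (f s - f t) ^+ 2 = f s ^+ 2 * #|T|%:R + (- (2 * f s)) * B + A.
  have -> : f s ^+ 2 * #|T|%:R = \sum_(t : T) f s ^+ 2 by rewrite sumr_const mulr_natr.
  rewrite /A /B big_distrr /=.
  rewrite -!big_split /=; apply: eq_bigr => t _; ring.
have e2 : \sum_s \sum_t (f s - f t) ^+ 2 = A * #|T|%:R + (-2 * B) * B + A * #|T|%:R.
  under eq_bigr => s _ do rewrite e1.
  rewrite !big_split /= -big_distrl /= -big_distrl /= sumr_const.
  have -> : \sum_s - (2 * f s) = -2 * B by rewrite /B big_distrr /=; apply: eq_bigr => s _; ring.
  by rewrite -/A -[A *+ _]mulr_natr.
rewrite e2 in h.
nra.
Qed.

Lemma card_setT (T : finType) : #|{: {set T}}| = (2 ^ #|T|)%N.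
Proof.
transitivity #|powerset [set: T]|; last by rewrite card_powerset cardsT.
by apply: eq_card => A; rewrite !inE finset.subsetT.
Qed.

Definition W := \sum_(p : PT) `|gh p|.

Lemma W_le : W ^+ 2 <= 2 ^+ (m1 + m2).
Proof.
apply: (le_trans (cs (fun p => `|gh p|))).
under eq_bigr => p _ do rewrite real_normK ?num_real //.
rewrite parseval mulr1 card_prod !card_setT !card_ord natrM.
have e m : ((2 ^ m)%N%:R : R) = 2 ^+ m by exact: natrX.
by rewrite !e exprD.
Qed.


Lemma W_gt0 : 0 < W.
Proof.
rewrite lt_def sumr_ge0 ?andbT => [|p _]; last exact: normr_ge0.
apply/negP => /eqP W0.
have h := psumr_eq0P (fun p _ => normr_ge0 (gh p)) W0.
have := inversion [ffun => false] [ffun => false].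
rewrite big1 => [|p _]; last by rewrite (normr0_eq0 (h p isT)) mul0r.
by case: (g _ _); rewrite /sgn => /eqP; rewrite ?oppr_eq0 oner_eq0.
Qed.

End P2.

Section P3.
Variable R : realType.

Lemma sum_ffun_prod (I J : finType) (F : I -> J -> R) :
  \sum_(f : {ffun I -> J}) \prod_i F i (f i) = \prod_i \sum_j F i j.
Proof. by rewrite bigA_distr_bigA. Qed.

Lemma forall_natr (I : finType) (b : I -> bool) :
  ([forall i, b i])%:R = \prod_i (b i)%:R :> R.
Proof.
case: (boolP [forall i, b i]) => [/forallP h | /forallPn [i hi]].
  by rewrite big1 // => i _; rewrite h.
by rewrite (bigD1 i) //= (negbTE hi) mul0r.
Qed.

Lemma count_bal m1 m2 (g : gadget m1 m2) (c : bool) :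
  \sum_a \sum_b sgn (g a b) = 0 :> R ->
  \sum_(a : Bm m1) \sum_(b : Bm m2) (g a b == c)%:R = 2 ^+ (m1 + m2) / 2 :> R.
Proof.
move=> h0.
have e a b : (g a b == c)%:R = (1 + sgn c * sgn (g a b)) / 2 :> R.
  by case: c; case: (g a b); rewrite /sgn /=; field.
under eq_bigr => a _ do under eq_bigr => b _ do rewrite e.
under eq_bigr => a _ do rewrite -big_distrl /=.
rewrite -big_distrl /=; congr (_ / 2).
under eq_bigr => a _ do rewrite big_split /= -big_distrr /=.
rewrite big_split /= -big_distrr /= h0 mulr0 addr0.
rewrite sumr_const card_Bm sumr_const card_Bm exprD.
have e2 m : ((2 ^ m)%N%:R : R) = 2 ^+ m by exact: natrX.
by rewrite mulrn2X e2 mulrC.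
Qed.

Lemma fiber_coef m1 m2 (g : gadget m1 m2) n (F : Inp n m1 -> Inp n m2 -> R) (I : {set 'I_n}) :
  \sum_a \sum_b sgn (g a b) = 0 :> R ->
  fcoef (fiber g F) I = 2 ^- ((m1 + m2) * n) *
     \sum_x \sum_y F x y * \prod_(i in I) sgn (g (x i) (y i)).
Proof.
move=> h0.
set h := 2 ^+ (m1 + m2) / 2 : R.
have den (z : Bm n) : \sum_(x : Inp n m1) \sum_(y : Inp n m2)
    ([forall i, g (x i) (y i) == z i])%:R = h ^+ n.
  under eq_bigr => x _ do under eq_bigr => y _ do rewrite forall_natr.
  under eq_bigr => x _ do rewrite (sum_ffun_prod (fun i b => (g (x i) b == z i)%:R)).
  rewrite (sum_ffun_prod (fun i a => \sum_b (g a b == z i)%:R)).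
  by rewrite (eq_bigr (fun _ => h)) ?prodr_const ?card_ord // => i _; rewrite count_bal.
set gz := fun (x : Inp n m1) (y : Inp n m2) => ([ffun i => g (x i) (y i)] : Bm n).
have evE (x : Inp n m1) (y : Inp n m2) (z : Bm n) : [forall i, g (x i) (y i) == z i] = (z == gz x y).
  apply/forallP/eqP => [hh|-> i]; last by rewrite ffunE.
  by apply/ffunP => i; rewrite ffunE; apply/esym/eqP/hh.
rewrite /fcoef /fiber /=.
under eq_bigr => z _ do rewrite den mulrAC.
rewrite -big_distrl /=.
under eq_bigr => z _ do rewrite big_distrl /=.
rewrite exchange_big /=.
under eq_bigr => x _ do under eq_bigr => z _ do rewrite big_distrl /=.
under eq_bigr => x _ do rewrite exchange_big /=.
have inner (x : Inp n m1) (y : Inp n m2) : \sum_(z : Bm n) (if [forall i, g (x i) (y i) == z i] then F x y else 0) *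
     \prod_(i in I) sgn (z i) = F x y * \prod_(i in I) sgn (g (x i) (y i)).
  rewrite (bigD1 (gz x y)) //= [X in _ + X]big1 => [|z hz]; last first.
    by rewrite evE (negbTE hz) mul0r.
  rewrite evE eqxx addr0; congr (_ * _); apply: eq_bigr => i _; by rewrite ffunE.
under eq_bigr => x _ do under eq_bigr => y _ do rewrite inner.
rewrite mulrA mulrC mulrA; congr (_ * _).
rewrite mulrC -invfM -exprMn exprM; congr ((_ ^+ _)^-1).
by rewrite /h; field.
Qed.

End P3.

Section P4.
Variable R : realType.
Variables n m : nat.
Variable S : 'I_n -> {set 'I_m}.

Definition pk i := [pick j0 in S i].
Definition flipr (r : Inp n m) (e : Inp n 1) : Inp n m :=
  [ffun i => [ffun j => r i j (+) (e i ord0 && (Some j == pk i))]].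
Definition xorp (r : Inp n m) (a : Inp n 1) : Inp n 1 :=
  [ffun i => [ffun u => a i u (+) par (S i) (r i)]].
Definition enc (r : Inp n m) (a : Inp n 1) : Inp n m := flipr r (xorp r a).

Lemma xorpK r : involutive (xorp r).
Proof. by move=> a; apply/ffunP => i; apply/ffunP => u; rewrite !ffunE addbK. Qed.

Lemma fliprK e : involutive (fun r => flipr r e).
Proof. by move=> r; apply/ffunP => i; apply/ffunP => u; rewrite !ffunE addbK. Qed.

Lemma card_Inp k q : #|{: Inp k q}| = (2 ^ (q * k))%N.
Proof. by rewrite card_ffun card_Bm card_ord expnM. Qed.

Lemma sim (H : Inp n m -> R) :
  \sum_r \sum_a H (enc r a) = 2 ^+ n * \sum_x H x.
Proof.
have e1 r : \sum_a H (enc r a) = \sum_e H (flipr r e).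
  by rewrite (reindex_inj (can_inj (xorpK r))) /=; apply: eq_bigr => a _; rewrite /enc xorpK.
under eq_bigr => r _ do rewrite e1.
rewrite exchange_big /=.
have e2 e : \sum_r H (flipr r e) = \sum_x H x.
  by rewrite [RHS](reindex_inj (can_inj (fliprK e))).
under eq_bigr => e _ do rewrite e2.
by rewrite sumr_const card_Inp mul1n mulrn2X mulrC.
Qed.

Lemma par_xor q (T : {set 'I_q}) (x y : Bm q) :
  par T [ffun j => x j (+) y j] = par T x (+) par T y.
Proof. by rewrite /par -big_split; apply: eq_bigr => j _; rewrite ffunE. Qed.

Lemma enc_par (r : Inp n m) (a : Inp n 1) i : S i != finset.set0 -> par (S i) (enc r a i) = a i ord0.
Proof.
move=> ne.
have -> : enc r a i = [ffun j => r i j (+) ((a i ord0 (+) par (S i) (r i)) && (Some j == pk i))].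
  by apply/ffunP => j; rewrite /enc /flipr /xorp !ffunE.
rewrite {1}/par; under eq_bigr => j _ do rewrite ffunE.
rewrite big_split /= -/(par (S i) (r i)).
have -> : \big[addb/false]_(j in S i) ((a i ord0 (+) par (S i) (r i)) && (Some j == pk i)) =
          a i ord0 (+) par (S i) (r i).
  rewrite /pk; case: pickP => [j0 hj0 | none]; last first.
    by case/set0Pn: ne => j; rewrite none.
  rewrite (bigD1 j0) //= big1 => [|j /andP [_ hj]]; last first.
    rewrite (_ : (Some j == Some j0) = false) ?andbF //.
    by apply/negbTE; apply: contra hj => /eqP [->].
  by rewrite eqxx andbT addbF.
by rewrite addbCA addbb addbF.
Qed.
End P4.


Fixpoint mapproto X Y X' Y' (fA : X' -> X) (fB : Y' -> Y) (p : proto X Y) : proto X' Y' :=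
  match p with
  | PLeaf b => PLeaf _ _ b
  | PAlice a p0 p1 => PAlice (fun x => a (fA x)) (mapproto fA fB p0) (mapproto fA fB p1)
  | PBob b p0 p1 => PBob (fun y => b (fB y)) (mapproto fA fB p0) (mapproto fA fB p1)
  end.

Lemma peval_map X Y X' Y' (fA : X' -> X) (fB : Y' -> Y) p x y :
  peval (mapproto fA fB p) x y = peval p (fA x) (fB y).
Proof. by elim: p => //= [a p0 IH0 p1 IH1 | b p0 IH0 p1 IH1]; rewrite IH0 IH1. Qed.

Lemma pcost_map X Y X' Y' (fA : X' -> X) (fB : Y' -> Y) p :
  pcost (mapproto fA fB p) = pcost p.
Proof. by elim: p => //= [a p0 IH0 p1 IH1 | b p0 IH0 p1 IH1]; rewrite IH0 IH1. Qed.

Section P5.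
Variable R : realType.
Variables n m1 m2 : nat.
Variable S1 : 'I_n -> {set 'I_m1}.
Variable S2 : 'I_n -> {set 'I_m2}.

Lemma sim2 (K : Inp n m1 -> Inp n m2 -> R) :
  \sum_a \sum_b \sum_r \sum_t K (enc S1 r a) (enc S2 t b) =
  2 ^+ n * 2 ^+ n * \sum_x \sum_y K x y.
Proof.
under eq_bigr => a _ do rewrite exchange_big /=.
under eq_bigr => a _ do under eq_bigr => r _ do rewrite exchange_big /= (sim S2 (K (enc S1 r a))).
rewrite exchange_big /=.
under eq_bigr => r _ do under eq_bigr => a _ do rewrite -/(fun x => \sum_y K x y) /=.
under eq_bigr => r _ do rewrite -big_distrr /=.
rewrite -big_distrr /= (sim S1 (fun x => \sum_y K x y)).
by rewrite mulrA.
Qed.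


Lemma sum_sgn1 : \sum_(a : Bm 1) sgn (a ord0) = 0 :> R.
Proof.
set X := (\sum_(a : Bm 1) sgn (a ord0) : R).
have negK : involutive (fun a : Bm 1 => [ffun j => ~~ a j]).
  by move=> a; apply/ffunP => j; rewrite !ffunE negbK.
have : X = - X.
  rewrite {1}/X (reindex_inj (can_inj negK)) /= /X -sumrN.
  by apply: eq_bigr => a _; rewrite ffunE; case: (a ord0); rewrite /sgn ?opprK.
move=> h; lra.
Qed.

Lemma xor_bal : \sum_a \sum_b sgn (XORg a b) = 0 :> R.
Proof.
rewrite /XORg.
under eq_bigr => a _ do under eq_bigr => b _ do rewrite sgnD.
by rewrite -big_distrlr /= sum_sgn1 mul0r.
Qed.

Definition Mr : R := (#|{: Inp n m1 * Inp n m2}|)%:R.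

Definition Csim (C : rproto R (Inp n m1) (Inp n m2)) : rproto R (Inp n 1) (Inp n 1) :=
  [seq (wp.1 / Mr, mapproto (enc S1 rt.1) (enc S2 rt.2) wp.2)
     | wp <- C, rt <- enum {: Inp n m1 * Inp n m2}].

Lemma Mr_gt0 : 0 < Mr.
Proof. by rewrite /Mr ltr0n card_prod !card_Inp muln_gt0 !expn_gt0. Qed.

Lemma Mr_E : Mr = 2 ^+ ((m1 + m2) * n).
Proof.
rewrite /Mr card_prod !card_Inp natrM.
have e2 k : ((2 ^ k)%N%:R : R) = 2 ^+ k by exact: natrX.
by rewrite !e2 -exprD mulnDl.
Qed.

Lemma Csim_valid C d : rproto_valid C d -> rproto_valid (Csim C) d.
Proof.
case=> h1 h2 h3; split.
- rewrite /Csim; elim: C h1 {h2 h3} => [|wp C IH] //= /andP [hw hC].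
  rewrite all_cat IH // andbT all_map; apply/seq.allP => rt _ /=.
  by rewrite divr_ge0 ?(ltW Mr_gt0).
- rewrite big_allpairs_dep /= -[RHS]h2; apply: eq_bigr => wp _.
  rewrite big_enum /= sumr_const -[_ / Mr *+ _]mulr_natr.
  have -> : (#|[pred x in {: Inp n m1 * Inp n m2}]|%:R : R) = Mr.
    by rewrite /Mr; congr (_ %:R); apply: eq_card => x; rewrite !inE.
  by rewrite divfK // gt_eqF // Mr_gt0.
- rewrite /Csim; elim: C h3 {h1 h2} => [|wp C IH] //= /andP [hw hC].
  rewrite all_cat IH // andbT all_map; apply/seq.allP => rt _ /=.
  by rewrite pcost_map.
Qed.


Lemma rval_Csim C a b : rval (Csim C) a b =
  \sum_(wp <- C) wp.1 / Mr * \sum_r \sum_t sgn (peval wp.2 (enc S1 r a) (enc S2 t b)).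
Proof.
rewrite /rval /Csim big_allpairs_dep /=; apply: eq_bigr => wp _.
rewrite big_enum /= [RHS]big_distrr /=.
under [RHS]eq_bigr => r _ do rewrite big_distrr /=.
rewrite [RHS]pair_bigA /=.
by apply: eq_big => [x|x _]; rewrite ?inE // peval_map.
Qed.

Definition PiS (I : {set 'I_n}) (x : Inp n m1) (y : Inp n m2) : R :=
  \prod_(i in I) ((\prod_(j in S1 i) sgn (x i j)) * (\prod_(j in S2 i) sgn (y i j))).

Lemma coef_Csim C I :
  (forall i, (S1 i != finset.set0) && (S2 i != finset.set0)) ->
  fcoef (fiber XORg (rval (Csim C))) I =
  2 ^- ((m1 + m2) * n) * \sum_x \sum_y rval C x y * PiS I x y.
Proof.
move=> ne.
rewrite fiber_coef ?xor_bal //.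
have chiE (a b : Inp n 1) (r : Inp n m1) (t : Inp n m2) : \prod_(i in I) sgn (XORg (a i) (b i)) = PiS I (enc S1 r a) (enc S2 t b).
  apply: eq_bigr => i _; rewrite /XORg sgnD !chi_par.
  by case/andP: (ne i) => n1 n2; rewrite !enc_par.
set K := fun wp x y => wp.1 / Mr * (sgn (peval wp.2 x y) * PiS I x y).
have e1 (a b : Inp n 1) : rval (Csim C) a b * \prod_(i in I) sgn (XORg (a i) (b i)) =
   \sum_(wp <- C) \sum_r \sum_t K wp (enc S1 r a) (enc S2 t b).
  rewrite rval_Csim big_distrl /=; apply: eq_bigr => wp _.
  rewrite -[_ * _ * \prod_(i in I) _]mulrA big_distrl big_distrr /=.
  apply: eq_bigr => r _.
  rewrite big_distrl big_distrr /=; apply: eq_bigr => t _.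
  by rewrite (chiE a b r t).
under eq_bigr => a _ do under eq_bigr => b _ do rewrite e1.
under eq_bigr => a _ do rewrite exchange_big /=.
rewrite exchange_big /=.
under eq_bigr => wp _ do rewrite sim2.
rewrite -big_distrr /= mulrA.
have -> : 2 ^- ((1 + 1) * n) * (2 ^+ n * 2 ^+ n) = 1 :> R.
  by rewrite -exprD mulnDl mul1n mulVf // expf_neq0 // pnatr_eq0.
rewrite mul1r -Mr_E exchange_big /=.
under eq_bigr => x _ do rewrite exchange_big /=.
rewrite big_distrr /=; apply: eq_bigr => x _.
rewrite big_distrr /=; apply: eq_bigr => y _.
rewrite /rval big_distrl big_distrr /=; apply: eq_bigr => wp _.
rewrite /K; ring.
Qed.

End P5.

Section P6.
Variable R : realType.

Lemma rval_abs X Y (C : rproto R X Y) x y :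
  all (fun wp => 0 <= wp.1) C -> `|rval C x y| <= \sum_(wp <- C) wp.1.
Proof.
elim: C => [|wp C IH] /=; first by rewrite /rval !big_nil normr0.
move/andP=> [h hC]; rewrite /rval !big_cons.
apply: le_trans (ler_normD _ _) _; apply: lerD; last exact: IH hC.
by rewrite normrM sgn_abs mulr1 ger0_norm.
Qed.

Lemma sum11 m1 m2 n : \sum_(x : Inp n m1) \sum_(y : Inp n m2) (1 : R) = 2 ^+ ((m1 + m2) * n).
Proof.
have e2 k : ((2 ^ k)%N%:R : R) = 2 ^+ k by exact: natrX.
under eq_bigr => x _ do rewrite sumr_const card_Inp e2.
by rewrite sumr_const card_Inp mulrn2X -exprD mulnDl addnC.
Qed.

Lemma fcoef_abs m1 m2 (g : gadget m1 m2) n (F : Inp n m1 -> Inp n m2 -> R) I :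
  \sum_a \sum_b sgn (g a b) = 0 :> R -> (forall x y, `|F x y| <= 1) ->
  `|fcoef (fiber g F) I| <= 1.
Proof.
move=> hb hF; rewrite fiber_coef // normrM ger0_norm ?invr_ge0 ?exprn_ge0 //.
have le : `|\sum_x \sum_y F x y * \prod_(i in I) sgn (g (x i) (y i))| <= 2 ^+ ((m1 + m2) * n).
  rewrite -sum11; apply: le_trans (ler_norm_sum _ _ _) _; apply: ler_sum => x _.
  apply: le_trans (ler_norm_sum _ _ _) _; apply: ler_sum => y _.
  rewrite normrM normr_prod big1 ?mulr1 // => i _; exact: sgn_abs.
have nz : (2 ^+ ((m1 + m2) * n) : R) != 0 by rewrite expf_neq0 // pnatr_eq0.
rewrite -[X in _ <= X](mulVf nz).
by apply: ler_wpM2l; rewrite ?invr_ge0 ?exprn_ge0.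
Qed.


Definition C0 X Y : rproto R X Y := [:: (1, PLeaf X Y false)].

Lemma C0_valid X Y d : rproto_valid (C0 X Y) d.
Proof. by split; rewrite /C0 //= ?big_seq1 // ler01. Qed.

Lemma L1k_ge0 n (f : Bm n -> R) k : 0 <= L1k f k.
Proof. by apply: sumr_ge0 => I _; exact: normr_ge0. Qed.

Lemma hasX d n k : has_sup [set L1k (fiber XORg (rval C)) k
      | C in [set C : rproto R (Inp n 1) (Inp n 1) | rproto_valid C d]].
Proof.
split.
  by exists (L1k (fiber XORg (rval (C0 (Inp n 1) (Inp n 1)))) k); exists (C0 _ _) => //; exact: C0_valid.
exists (\sum_(I : {set 'I_n} | #|I| == k) (1 : R)) => _ [C hC <-].
apply: ler_sum => I _; apply: fcoef_abs; first exact: xor_bal.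
move=> x y; case: hC => h1 h2 _; rewrite -h2; exact: rval_abs.
Qed.

Lemma supX_ub d n k (C : rproto R (Inp n 1) (Inp n 1)) : rproto_valid C d ->
  L1k (fiber XORg (rval C)) k <= L1k_sup R XORg d n k.
Proof. by move=> hC; apply: (sup_upper_bound (hasX d n k)); exists C. Qed.

Lemma supX_ge0 d n k : 0 <= L1k_sup R XORg d n k.
Proof.
exact: le_trans (L1k_ge0 _ _) (@supX_ub d n k _ (C0_valid (Inp n 1) (Inp n 1) d)).
Qed.

End P6.

Section P7.
Variable R : realType.
Variables m1 m2 : nat.
Variable g : gadget m1 m2.

Let Wg := W R g.
Definition q (p : PT m1 m2) : R := `|gh R g p| / Wg.
Definition sg (p : PT m1 m2) : R := if gh R g p < 0 then -1 else 1.

Lemma Wg_neq0 : Wg != 0.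
Proof. by rewrite gt_eqF // W_gt0. Qed.

Lemma gh_dec p : gh R g p = Wg * q p * sg p.
Proof.
rewrite /q mulrCA mulfV ?Wg_neq0 // mulr1 /sg.
case: ltrP => h; first by rewrite ltr0_norm // mulrN1 opprK.
by rewrite ger0_norm // mulr1.
Qed.

Lemma sum_q : \sum_p q p = 1.
Proof. by rewrite /q -big_distrl /= mulfV ?Wg_neq0. Qed.

Lemma q_ge0 p : 0 <= q p.
Proof. by rewrite /q divr_ge0 // ltW // W_gt0. Qed.

Definition Qc n (c : {ffun 'I_n -> PT m1 m2}) : R := \prod_i q (c i).

Lemma sum_Qc n : \sum_(c : {ffun 'I_n -> PT m1 m2}) Qc c = 1.
Proof.
rewrite /Qc -(bigA_distr_bigA (fun i p => q p)) /=.
by rewrite big1 // => i _; rewrite sum_q.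
Qed.

Lemma expand n (I : {set 'I_n}) (x : Inp n m1) (y : Inp n m2) :
  \prod_(i in I) sgn (g (x i) (y i)) =
  Wg ^+ #|I| * \sum_(c : {ffun 'I_n -> PT m1 m2})
     Qc c * (\prod_(i in I) sg (c i)) * PiS R (fun i => (c i).1) (fun i => (c i).2) I x y.
Proof.
under eq_bigr => i _ do rewrite (inversion R g (x i) (y i)).
rewrite big_mkcond /=.
have e i : (if i \in I then \sum_p gh R g p * chi2 R p (x i) (y i) else 1) =
    \sum_p (if i \in I then gh R g p * chi2 R p (x i) (y i) else q p).
  by case: (i \in I); rewrite ?sum_q.
under eq_bigr => i _ do rewrite e.
rewrite bigA_distr_bigA /= big_distrr /=; apply: eq_bigr => c _.
rewrite /Qc /PiS.
have e2 i : (if i \in I then gh R g (c i) * chi2 R (c i) (x i) (y i) else q (c i)) =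
   q (c i) * (if i \in I then Wg * sg (c i) * chi2 R (c i) (x i) (y i) else 1).
  by case: (i \in I); rewrite ?mulr1 // gh_dec; ring.
under eq_bigr => i _ do rewrite e2.
rewrite big_split /= -big_mkcond /=.
rewrite [\prod_(i in I) (_ * _)]big_split /= [\prod_(i in I) (_ * _)]big_split /= prodr_const.
rewrite /chi2; ring.
Qed.


Hypothesis H0 : forall (S : {set 'I_m1}) (T : {set 'I_m2}),
      (S == finset.set0) || (T == finset.set0) -> gadget_coef R g S T = 0.

Lemma bal : \sum_a \sum_b sgn (g a b) = 0 :> R.
Proof.
have := H0 (S := finset.set0) (T := finset.set0); rewrite eqxx => /(_ isT).
rewrite /gadget_coef => /eqP; rewrite mulf_eq0 invr_eq0 (negbTE (N_neq0 R m1 m2)) /= => /eqP h.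
rewrite -[RHS]h.
by apply: eq_bigr => a _; apply: eq_bigr => b _; rewrite !big_set0 !mulr1.
Qed.

Definition Bc n (F : Inp n m1 -> Inp n m2 -> R) (c : {ffun 'I_n -> PT m1 m2}) I : R :=
  2 ^- ((m1 + m2) * n) * \sum_x \sum_y F x y * PiS R (fun i => (c i).1) (fun i => (c i).2) I x y.

Lemma coefE n (F : Inp n m1 -> Inp n m2 -> R) I :
  fcoef (fiber g F) I = Wg ^+ #|I| *
    \sum_(c : {ffun 'I_n -> PT m1 m2}) Qc c * (\prod_(i in I) sg (c i)) * Bc F c I.
Proof.
rewrite fiber_coef ?bal //.
under eq_bigr => x _ do under eq_bigr => y _ do rewrite expand.
under eq_bigr => x _ do under eq_bigr => y _ do rewrite mulrCA big_distrr big_distrr /=.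
under eq_bigr => x _ do rewrite exchange_big /=.
rewrite exchange_big /= [LHS]big_distrr [RHS]big_distrr /=; apply: eq_bigr => c _.
rewrite /Bc !big_distrr /=; apply: eq_bigr => x _.
rewrite !big_distrr /=; apply: eq_bigr => y _.
ring.
Qed.


Lemma sg_abs p : `|sg p| = 1.
Proof. by rewrite /sg; case: ltP; rewrite ?normrN normr1. Qed.

Lemma Wg_ge0 : 0 <= Wg.
Proof. exact: ltW (W_gt0 R g). Qed.

Lemma Qc_ge0 n (c : {ffun 'I_n -> PT m1 m2}) : 0 <= Qc c.
Proof. by apply: prodr_ge0 => i _; exact: q_ge0. Qed.

Lemma main_bound n d k (C : rproto R (Inp n m1) (Inp n m2)) : rproto_valid C d ->
  L1k (fiber g (rval C)) k <= Wg ^+ k * L1k_sup R XORg d n k.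
Proof.
move=> hC.
set F := rval C.
have b1 (I : {set 'I_n}) : #|I| == k -> `|fcoef (fiber g F) I| <=
     Wg ^+ k * \sum_(c : {ffun 'I_n -> PT m1 m2}) Qc c * `|Bc F c I|.
  move/eqP => hI; rewrite coefE hI normrM ger0_norm ?exprn_ge0 ?Wg_ge0 //.
  apply: ler_wpM2l; first by rewrite exprn_ge0 ?Wg_ge0.
  apply: le_trans (ler_norm_sum _ _ _) _; apply: ler_sum => c _.
  have e1 : `|\prod_(i in I) sg (c i)| = 1 by rewrite normr_prod big1 // => i _; exact: sg_abs.
  by rewrite normrM normrM e1 mulr1 (ger0_norm (Qc_ge0 c)).
rewrite /L1k; apply: le_trans (ler_sum _ b1) _.
rewrite -big_distrr /=; apply: ler_wpM2l; first by rewrite exprn_ge0 ?Wg_ge0.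
rewrite exchange_big /= -(mulr1 (L1k_sup _ _ _ _ _)) -(sum_Qc n) big_distrr /=.
apply: ler_sum => c _; rewrite -big_distrr /= mulrC.
case: (boolP [forall i, ((c i).1 != finset.set0) && ((c i).2 != finset.set0)]) =>
   [/forallP ne | /forallPn [i hi]].
  apply: ler_wpM2r; first exact: Qc_ge0.
  have -> : \sum_(I : {set 'I_n} | #|I| == k) `|Bc F c I| =
     L1k (fiber XORg (rval (Csim (fun i => (c i).1) (fun i => (c i).2) C))) k.
    by rewrite /L1k; apply: eq_bigr => I _; rewrite coef_Csim.
  exact: supX_ub (Csim_valid _ _ hC).
have -> : Qc c = 0.
  rewrite /Qc (bigD1 i) //= /q.
  have -> : gh R g (c i) = 0.
    by rewrite /gh; apply: H0; move: hi; rewrite negb_and !negbK.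
  by rewrite normr0 !mul0r.
by rewrite !mulr0.
Qed.

End P7.


Unset Implicit Arguments.
Set Strict Implicit.

Theorem theorem7p6 (R : realType) (m1 m2 : nat) (g : gadget m1 m2) :
  (forall (S : {set 'I_m1}) (T : {set 'I_m2}),
      (S == finset.set0) || (T == finset.set0) -> gadget_coef R g S T = 0) ->
  forall k d n : nat,
    L1k_sup R g d n k <=
      (\sum_(S : {set 'I_m1}) \sum_(T : {set 'I_m2}) `|gadget_coef R g S T|) ^+ k
        * L1k_sup R XORg d n k
    /\
    (\sum_(S : {set 'I_m1}) \sum_(T : {set 'I_m2}) `|gadget_coef R g S T|) ^+ k
        * L1k_sup R XORg d n k
      <= Num.sqrt (2 : R) ^+ ((m1 + m2) * k) * L1k_sup R XORg d n k.
Proof.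
move=> H0 k d n.
have WE : \sum_(S : {set 'I_m1}) \sum_(T : {set 'I_m2}) `|gadget_coef R g S T| = W R g.
  by rewrite /W pair_bigA.
rewrite WE; split.
  apply: ge_sup.
    exists (L1k (fiber g (rval (C0 R (Inp n m1) (Inp n m2)))) k).
    by exists (C0 _ _ _) => //; exact: C0_valid.
  move=> _ [C hC <-]; exact: (@main_bound _ _ _ _ H0 n d k C hC).
apply: ler_wpM2r; first exact: supX_ge0.
have W0 := ltW (W_gt0 R g).
have s0 : 0 <= Num.sqrt (2 : R) ^+ (m1 + m2) by rewrite exprn_ge0 ?sqrtr_ge0.
rewrite exprM; apply: (lerXn2r k); rewrite ?inE //.
rewrite -ler_sqr ?inE // -exprM mulnC exprM sqr_sqrtr ?ler0n //.
exact: W_le.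
Qed.
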